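(* Let $p\ge 1$, let $\mathcal H$ be a finite set of hidden neurons with $H=|\mathcal H|$, and let $B\in\mathbb{R}^{p\times H}$ be the neuron/parameter incidence matrix described in the context. Let $g\in\mathbb{R}^p$ with $g_i>0$ for all $i$, and define $$F(u):=p\log\Big(\sum_{i=1}^p e^{(Bu)_i}g_i\Big)-\sum_{i=1}^p (Bu)_i,\qquad u\in\mathbb{R}^H.$$ Fix $u\in\mathbb{R}^H$ and a neuron $h$, and set $\rho_{i,h}:=e^{(Bu)_i-B_{ih}u_h}$ for $i=1,\dots,p$. Define $$\mathcal A:=|\mathrm{in}_h|-|\mathrm{out}_h|,\quad \mathcal B:=\sum_{i\in\mathrm{out}_h}\rho_{i,h}g_i,\quad \mathcal C:=\sum_{i\in\mathrm{in}_h}\rho_{i,h}g_i,\quad \mathcal D:=\sum_{i\in\mathrm{other}_h}\rho_{i,h}g_i.$$ Then the polynomial $\mathcal B(\mathcal A+p)X^2+\mathcal A\mathcal D X+\mathcal C(\mathcal A-p)$ has a unique positive root $r_h$, and the one-dimensional problem $\min_{u_h\in\mathbb{R}}F(u_1,\dots,u_h,\dots,u_H)$ (all other coordinates fixed) has a solution given by $u_h=\log(r_h)$.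
   Context: Let $\mathcal G=(V,E)$ be a finite directed acyclic graph. For $v\in V$, $\mathrm{ant}(v)=\{u:(u,v)\in E\}$, $\mathrm{suc}(v)=\{u:(v,u)\in E\}$. Input neurons are those with no antecedents, output neurons those with no successors, and hidden neurons $\mathcal H$ are the remaining ones. The parameter vector $\theta\in\mathbb{R}^p$ consists of one weight $\theta_{u\to v}$ per edge $(u,v)\in E$ and one bias $b_v$ per non-input neuron $v$, indexed in a fixed order. For a hidden neuron $h$: $\mathrm{in}_h$ is the set of indices of $b_h$ and of the weights $\theta_{u\to h}$, $u\in\mathrm{ant}(h)$; $\mathrm{out}_h$ is the set of indices of the weights $\theta_{h\to u}$, $u\in\mathrm{suc}(h)$; $\mathrm{other}_h=\{1,\dots,p\}\setminus(\mathrm{in}_h\cup\mathrm{out}_h)$. The matrix $B\in\mathbb{R}^{p\times H}$ has columns indexed by hidden neurons with $B_{ih}=-1$ if $i\in\mathrm{in}_h$, $B_{ih}=1$ if $i\in\mathrm{out}_h$, and $B_{ih}=0$ otherwise. (In the paper $g$ is the diagonal of $\partial\Phi(\theta)^\top\partial\Phi(\theta)$, with $\Phi$ the path-lifting, but the statement only uses $g>0$.) *)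

(* Defs.v *)
From HB Require Import structures.
From mathcomp Require Import all_boot all_order all_algebra.
From mathcomp Require Import all_classical all_reals all_analysis.
Set Implicit Arguments. Unset Strict Implicit. Unset Printing Implicit Defensive.
Import Order.TTheory GRing.Theory Num.Theory.
Local Open Scope ring_scope.

Section NN.
Variables (V : finType) (E : rel V).

Definition acyclic_graph : bool :=
  [forall x, ~~ [exists y, E x y && connect E y x]].

Definition is_input (v : V) : bool := [forall u, ~~ E u v].
Definition is_output (v : V) : bool := [forall u, ~~ E v u].
Definition is_hidden (v : V) : bool := ~~ is_input v && ~~ is_output v.

(* parameter indices: one weight per edge, one bias per non-input neuron *)
Definition edge_idx := {x : V * V | E x.1 x.2}.
Definition bias_idx := {v : V | ~~ is_input v}.
Definition param := (edge_idx + bias_idx)%type.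

Definition hidden := {v : V | is_hidden v}.

Definition in_idx (h : V) : pred param := fun i =>
  match i with
  | inl e => (val e).2 == h
  | inr b => val b == h
  end.
Definition out_idx (h : V) : pred param := fun i =>
  match i with
  | inl e => (val e).1 == h
  | inr _ => false
  end.
Definition other_idx (h : V) : pred param := fun i =>
  ~~ in_idx h i && ~~ out_idx h i.

Definition Bmat {R : pzRingType} (i : param) (h : hidden) : R :=
  if in_idx (val h) i then -1 else if out_idx (val h) i then 1 else 0.

Definition Bu {R : pzRingType} (u : hidden -> R) (i : param) : R :=
  \sum_(h : hidden) Bmat i h * u h.

Definition Fobj {R : realType} (g : param -> R) (u : hidden -> R) : R :=
  #|{: param}|%:R * ln (\sum_(i : param) expR (Bu u i) * g i)
  - \sum_(i : param) Bu u i.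

Definition upd {R : Type} (u : hidden -> R) (h : hidden) (t : R) : hidden -> R :=
  fun k => if k == h then t else u k.

Definition rho {R : realType} (u : hidden -> R) (h : hidden) (i : param) : R :=
  expR (Bu u i - Bmat i h * u h).

Definition coefA {R : pzRingType} (h : hidden) : R :=
  #|in_idx (val h)|%:R - #|out_idx (val h)|%:R.
Definition coefB {R : realType} (g : param -> R) (u : hidden -> R) (h : hidden) : R :=
  \sum_(i | out_idx (val h) i) rho u h i * g i.
Definition coefC {R : realType} (g : param -> R) (u : hidden -> R) (h : hidden) : R :=
  \sum_(i | in_idx (val h) i) rho u h i * g i.
Definition coefD {R : realType} (g : param -> R) (u : hidden -> R) (h : hidden) : R :=
  \sum_(i | other_idx (val h) i) rho u h i * g i.

Definition quad_poly {R : realType} (g : param -> R) (u : hidden -> R) (h : hidden)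
  : {poly R} :=
  let p : R := #|{: param}|%:R in
  (coefB g u h * (coefA h + p))%:P * 'X^2
  + (coefA h * coefD g u h)%:P * 'X
  + (coefC g u h * (coefA h - p))%:P.

End NN.

(* Main.v *)
Require Import Defs.
From HB Require Import structures.
From mathcomp Require Import all_boot all_order all_algebra.
From mathcomp Require Import all_classical all_reals all_analysis.
From mathcomp Require Import ring lra.
From mathcomp Require Import ring lra.
Import Order.TTheory GRing.Theory Num.Theory.
Local Open Scope ring_scope.
Set Implicit Arguments. Unset Strict Implicit.
Lemma key (R : realType) (I : finType) (c b g : I -> R) (p T t : R) :
 (forall i, 0 < g i) -> 0 <= p -> 0 < \sum_i expR (c i + b i * T) * g i ->
 p * \sum_i b i * (expR (c i + b i * T) * g i) =
   (\sum_i b i) * \sum_i expR (c i + b i * T) * g i ->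
 p * ln (\sum_i expR (c i + b i * T) * g i) - \sum_i (c i + b i * T) <=
 p * ln (\sum_i expR (c i + b i * t) * g i) - \sum_i (c i + b i * t).
Proof.
move=> gp p0 S0p crit.
set S0 := \sum_i expR (c i + b i * T) * g i in S0p crit *.
set Sb := \sum_i b i * (expR (c i + b i * T) * g i) in crit.
set d := t - T.
set k := d * Sb / S0.
have St : expR k * S0 <= \sum_i expR (c i + b i * t) * g i.
  have -> : expR k * S0 = \sum_i expR k * ((expR (c i + b i * T) * g i) * (1 - k)
        + d * (b i * (expR (c i + b i * T) * g i))).
    rewrite -mulr_sumr big_split /= -mulr_suml -mulr_sumr -/S0 -/Sb.
    congr (_ * _); rewrite /k; field; exact: lt0r_neq0.
  apply: ler_sum => i _.
  have -> : c i + b i * t = (c i + b i * T) + (k + (b i * d - k)).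
    rewrite /d; ring.
  rewrite (expRD (c i + b i * T)) (expRD k).
  have := expR_ge1Dx (b i * d - k).
  have := expR_gt0 (c i + b i * T); have := expR_gt0 k; have := gp i.
  set e1 := expR (c i + b i * T); set e2 := expR k; set e3 := expR (b i * d - k).
  move=> g0 e20 e10 h3.
  have -> : e2 * (e1 * g i * (1 - k) + d * (b i * (e1 * g i))) = (e2 * e1 * g i) * (1 + (b i * d - k)) by ring.
  have -> : e1 * (e2 * e3) * g i = (e2 * e1 * g i) * e3 by ring.
  apply: ler_wpM2l => //.
  by rewrite !mulr_ge0 // ltW.
have Stp : 0 < \sum_i expR (c i + b i * t) * g i.
  apply: lt_le_trans St; exact: mulr_gt0 (expR_gt0 _) S0p.
have lnS : k + ln S0 <= ln (\sum_i expR (c i + b i * t) * g i).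
  rewrite -[k]expRK -lnM ?posrE ?expR_gt0 //.
  by rewrite ler_ln // posrE // mulr_gt0 // expR_gt0.
have sumE : \sum_i (c i + b i * t) = \sum_i (c i + b i * T) + d * \sum_i b i.
  rewrite mulr_sumr -big_split /=; apply: eq_bigr => i _; rewrite /d; ring.
have pk : p * k = d * \sum_i b i.
  rewrite /k; have -> : p * (d * Sb / S0) = d * (p * Sb) / S0 by ring.
  rewrite crit; field; exact: lt0r_neq0.
rewrite sumE.
have := ler_wpM2l p0 lnS.
rewrite mulrDr pk.
set L := ln _; set L0 := ln S0; set X := \sum_i (c i + b i * T); set Y := d * _.
move=> H. lra.
Qed.

Lemma Bu_upd (R : realType) (V : finType) (E : rel V) (u : hidden E -> R)
  (h : hidden E) (t : R) (i : param E) :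
  Bu (upd u h t) i = (Bu u i - Bmat i h * u h) + Bmat i h * t.
Proof.
rewrite /Bu (bigD1 h) //= [in RHS](bigD1 h) //= /upd eqxx.
rewrite (eq_bigr (fun k => Bmat i k * u k)); first ring.
by move=> k /negbTE ->.
Qed.

Lemma in_out_disj (V : finType) (E : rel V) (acyc : acyclic_graph E) (h : V)
  (i : param E) : in_idx h i -> ~~ out_idx h i.
Proof.
case: i => [[[x y] /= Exy]|b] //=.
move=> /eqP Ey; apply/negP => /eqP Ex; subst.
move/forallP: acyc => /(_ h) /negP; apply.
apply/existsP; exists h; rewrite Exy; exact: connect0.
Qed.

Lemma out_not_in (V : finType) (E : rel V) (acyc : acyclic_graph E) (h : V)
  (i : param E) : out_idx h i -> ~~ in_idx h i.
Proof. move=> Ho; apply/negP => Hi; by move: (in_out_disj acyc Hi); rewrite Ho. Qed.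

Lemma split3 (R : realType) (V : finType) (E : rel V) (acyc : acyclic_graph E)
  (h : V) (F : param E -> R) :
  \sum_i F i = \sum_(i | in_idx h i) F i + \sum_(i | out_idx h i) F i
     + \sum_(i | other_idx h i) F i.
Proof.
rewrite (bigID (in_idx h)) /=.
rewrite [X in _ + X](bigID (out_idx h)) /= addrA.
congr (_ + _ + _); apply: eq_bigl => i //.
case Hi: (in_idx h i) => //=.
by rewrite (negbTE (in_out_disj acyc Hi)).
Qed.

Theorem lemma4p1 (R : realType) (V : finType) (E : rel V)
  (acyc : acyclic_graph E)
  (g : param E -> R) (gpos : forall i, 0 < g i)
  (u : hidden E -> R) (h : hidden E) :
  exists r : R,
    [/\ 0 < r, root (quad_poly g u h) r,
        (forall r' : R, 0 < r' -> root (quad_poly g u h) r' -> r' = r)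
      & forall t : R, Fobj g (upd u h (ln r)) <= Fobj g (upd u h t)].
Proof.
have hh := valP h; rewrite /is_hidden in hh.
case/andP: hh => hin hout.
have [w Ew] : exists w, E (val h) w.
  move/forallPn: hout => [w /negPn Ew]; by exists w.
pose jo : param E := inl (exist _ (val h, w) Ew).
pose ji : param E := inr (exist _ (val h) hin).
have jo_out : out_idx (val h) jo by rewrite /= eqxx.
have ji_in : in_idx (val h) ji by rewrite /= eqxx.
have rhop : forall i, 0 < rho u h i * g i by move=> i; rewrite mulr_gt0 ?expR_gt0.
set A := coefA (R:=R) h; set Bc := Defs.coefB g u h; set C := Defs.coefC g u h; set D := Defs.coefD g u h.
set p : R := #|{: param E}|%:R.
have Bp : 0 < Bc.
  rewrite /Bc /Defs.coefB (bigD1 jo) //=.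
  have : 0 <= \sum_(i | out_idx (val h) i && (i != jo)) rho u h i * g i.
    by apply: sumr_ge0 => i _; exact: ltW.
  have := rhop jo; lra.
have Cp : 0 < C.
  rewrite /C /Defs.coefC (bigD1 ji) //=.
  have : 0 <= \sum_(i | in_idx (val h) i && (i != ji)) rho u h i * g i.
    by apply: sumr_ge0 => i _; exact: ltW.
  have := rhop ji; lra.
have D0 : 0 <= D by apply: sumr_ge0 => i _; exact: ltW.
have cin : (1 : R) <= #|in_idx (E:=E) (val h)|%:R.
  rewrite -[1 : R]/(1%:R : R) ler_nat; apply/card_gt0P; by exists ji.
have cout : (1 : R) <= #|out_idx (E:=E) (val h)|%:R.
  rewrite -[1 : R]/(1%:R : R) ler_nat; apply/card_gt0P; by exists jo.
have cin' : (#|in_idx (E:=E) (val h)|%:R : R) <= p by rewrite ler_nat max_card.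
have cout' : (#|out_idx (E:=E) (val h)|%:R : R) <= p by rewrite ler_nat max_card.
have Ap : 0 < A + p by rewrite /A /coefA; lra.
have Am : A - p < 0 by rewrite /A /coefA; lra.
set a := Bc * (A + p); set bq := A * D; set cq := C * (A - p).
have a0 : 0 < a by rewrite mulr_gt0.
have c0 : cq < 0 by rewrite /cq pmulr_rlt0.
have qE : forall x, (quad_poly g u h).[x] = a * x ^+ 2 + bq * x + cq.
  by move=> x; rewrite /quad_poly !hornerE.
set s := Num.sqrt (bq ^+ 2 - 4 * a * cq).
have s0 : 0 <= s by apply: sqrtr_ge0.
have s2 : s ^+ 2 = bq ^+ 2 - 4 * a * cq.
  by rewrite sqr_sqrtr // ; nra.
have sb : bq < s by nra.
set r := (s - bq) / (2 * a).
have r0 : 0 < r by rewrite /r divr_gt0 //; lra.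
have qr : a * r ^+ 2 + bq * r + cq = 0.
  rewrite /r; apply: (@mulIf _ (4 * a)); first by rewrite mulf_neq0 // lt0r_neq0.
  rewrite mul0r.
  have -> : (a * ((s - bq) / (2 * a)) ^+ 2 + bq * ((s - bq) / (2 * a)) + cq) * (4 * a)
     = s ^+ 2 - bq ^+ 2 + 4 * a * cq by field; exact: lt0r_neq0.
  rewrite s2; ring.
exists r; split => //.
- by rewrite /root qE qr.
- move=> r' r'0; rewrite /root qE => /eqP qr'.
  have : (r' - r) * (a * (r' + r) + bq) = 0.
    rewrite -[0](subrr 0) -{1}qr' -qr; ring.
  move/eqP; rewrite mulf_eq0 => /orP [/eqP H|/eqP H]; first lra.
  have Hb : bq = - (a * (r' + r)) by lra.
  have : a * r * r' = cq.
    have -> : a * r * r' = cq - (a * r ^+ 2 + bq * r + cq) by rewrite Hb; ring.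
    by rewrite qr subr0.
  have : 0 < a * r * r' by apply: mulr_gt0 => //; apply: mulr_gt0.
  lra.
move=> t.
pose c i := Bu u i - Bmat (R:=R) i h * u h.
pose b i := Bmat (R:=R) i h.
have FE : forall t', Fobj g (upd u h t') =
   p * ln (\sum_i expR (c i + b i * t') * g i) - \sum_i (c i + b i * t').
  move=> t'; rewrite /Fobj; congr (_ * ln _ - _); apply: eq_bigr => i _; by rewrite Bu_upd.
rewrite !FE.
have phiE : forall i, expR (c i + b i * ln r) * g i = rho u h i * g i *
    (if in_idx (val h) i then r^-1 else if out_idx (val h) i then r else 1).
  move=> i; rewrite expRD /b /Bmat.
  case: ifP => Hi; first by rewrite mulN1r expRN lnK ?posrE // mulrAC.
  case: ifP => Ho; first by rewrite mul1r lnK ?posrE // mulrAC.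
  by rewrite mul0r expR0 !mulr1.
have SE : \sum_i expR (c i + b i * ln r) * g i = C / r + Bc * r + D.
  rewrite (eq_bigr _ (fun i _ => phiE i)) (split3 acyc (val h)).
  congr (_ + _ + _).
  - rewrite /C /Defs.coefC mulr_suml; apply: eq_bigr => i Hi; by rewrite Hi.
  - rewrite /Bc /Defs.coefB mulr_suml; apply: eq_bigr => i Hi.
    by rewrite (negbTE (out_not_in acyc Hi)) Hi.
  - apply: eq_bigr => i /andP [/negbTE -> /negbTE ->]; by rewrite mulr1.
have SbE : \sum_i b i * (expR (c i + b i * ln r) * g i) = - (C / r) + Bc * r + 0.
  under eq_bigr do rewrite phiE.
  rewrite (split3 acyc (val h)).
  congr (_ + _ + _).
  - rewrite /C /Defs.coefC mulr_suml -sumrN; apply: eq_bigr => i Hi.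
    by rewrite /b /Bmat Hi mulN1r.
  - rewrite /Bc /Defs.coefB mulr_suml; apply: eq_bigr => i Hi.
    by rewrite /b /Bmat (negbTE (out_not_in acyc Hi)) Hi mul1r.
  - apply: big1 => i /andP [/negbTE Hi /negbTE Ho]; by rewrite /b /Bmat Hi Ho mul0r.
have bE : \sum_i b i = - (#|in_idx (E:=E) (val h)|%:R) + #|out_idx (E:=E) (val h)|%:R + 0.
  rewrite (split3 acyc (val h)).
  congr (_ + _ + _).
  - rewrite (eq_bigr (fun _ => -1)); last by move=> i Hi; rewrite /b /Bmat Hi.
    rewrite (eq_bigl (fun i => i \in in_idx (val h))) // sumr_const mulNrn //.
  - rewrite (eq_bigr (fun _ => 1)); last first.
      by move=> i Hi; rewrite /b /Bmat (negbTE (out_not_in acyc Hi)) Hi.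
    by rewrite (eq_bigl (fun i => i \in out_idx (val h))) // sumr_const.
  - apply: big1 => i /andP [/negbTE Hi /negbTE Ho]; by rewrite /b /Bmat Hi Ho.
apply: (@key R (param E) c b g p (ln r) t).
- exact: gpos.
- exact: ler0n.
- rewrite SE; have : 0 < Bc * r by rewrite mulr_gt0.
  have : 0 < C / r by rewrite divr_gt0.
  lra.
- rewrite SE SbE bE.
  apply/eqP; rewrite -subr_eq0; apply/eqP.
  have rn0 : r != 0 by rewrite lt0r_neq0.
  set ni := (#|in_idx (E:=E) (val h)|%:R : R).
  set no := (#|out_idx (E:=E) (val h)|%:R : R).
  have AE : A = ni - no by [].
  have -> : p * (- (C / r) + Bc * r + 0) - (- ni + no + 0) * (C / r + Bc * r + D)
      = (a * r ^+ 2 + bq * r + cq) / r.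
    rewrite /a /bq /cq AE; field; exact: rn0.
  by rewrite qr mul0r.
Qed.
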